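(* Let $f\in C^1$ and suppose that for every $a\in\mathbb R$ the initial value problem $v_{xx}+f(x,v,v_x)=0$, $v(0)=a$, $v_x(0)=0$ has a solution $v(\cdot,a)$ on $[0,1]$. Let $v_j,v_k$ be two solutions of the Neumann problem $v_{xx}+f(x,v,v_x)=0$, $v_x(0)=v_x(1)=0$, with $a_j:=v_j(0)<a_k:=v_k(0)$. Set $w(x):=(v_k(x)-v_j(x))/(a_k-a_j)$, and let $\vartheta:[0,1]\to\mathbb R$ be the continuous function with $\vartheta(0)=0$ such that $w=\rho\cos\vartheta$, $w_x=-\rho\sin\vartheta$ for some $\rho>0$ (clockwise Prüfer angle; $(w,w_x)$ never vanishes since $w$ is a nontrivial solution of a linear second order ODE with $w(0)=1$, $w_x(0)=0$). Then $\vartheta(1)/\pi$ is an integer and $$z(v_k-v_j)=\vartheta(1)/\pi,$$ where $z(\varphi)$ denotes the number of strict sign changes of $\varphi$ on $[0,1]$. *)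

(* Defs.v *)
From Stdlib Require Import Reals Lra.
Open Scope R_scope.

Definition in01 (x : R) : Prop := 0 <= x <= 1.

Definition cont3 (g : R -> R -> R -> R) : Prop :=
  forall x y z eps, 0 < eps -> exists delta, 0 < delta /\
    forall x' y' z', Rabs (x' - x) < delta -> Rabs (y' - y) < delta ->
      Rabs (z' - z) < delta -> Rabs (g x' y' z' - g x y z) < eps.

Definition C1_3 (f : R -> R -> R -> R) : Prop :=
  cont3 f /\
  exists f1 f2 f3 : R -> R -> R -> R,
    cont3 f1 /\ cont3 f2 /\ cont3 f3 /\
    forall x y z,
      derivable_pt_lim (fun t => f t y z) x (f1 x y z) /\
      derivable_pt_lim (fun t => f x t z) y (f2 x y z) /\
      derivable_pt_lim (fun t => f x y t) z (f3 x y z).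

Definition deriv01 (v v' : R -> R) : Prop :=
  forall x, in01 x -> forall eps, 0 < eps -> exists delta, 0 < delta /\
    forall y, in01 y -> Rabs (y - x) < delta ->
      Rabs (v y - v x - v' x * (y - x)) <= eps * Rabs (y - x).

Definition cont01 (g : R -> R) : Prop :=
  forall x, in01 x -> forall eps, 0 < eps -> exists delta, 0 < delta /\
    forall y, in01 y -> Rabs (y - x) < delta -> Rabs (g y - g x) < eps.

Definition is_sol01 (f : R -> R -> R -> R) (v v' v'' : R -> R) : Prop :=
  deriv01 v v' /\ deriv01 v' v'' /\
  forall x, in01 x -> v'' x + f x (v x) (v' x) = 0.

Definition sign_changes_ge (phi : R -> R) (k : nat) : Prop :=
  exists s : nat -> R,
    (forall i, (i <= k)%nat -> in01 (s i)) /\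
    (forall i, (i < k)%nat -> s i < s (S i) /\ phi (s i) * phi (s (S i)) < 0).

Definition zero_number (phi : R -> R) (n : nat) : Prop :=
  sign_changes_ge phi n /\ ~ sign_changes_ge phi (S n).

(* Main.v *)
Require Import Defs.
From Stdlib Require Import Reals Lra Lia Ranalysis5 IndefiniteDescription.
Open Scope R_scope.

Definition clamp01 (x : R) := Rmax 0 (Rmin 1 x).

Lemma clamp01_in x : in01 (clamp01 x).
Proof. unfold clamp01, in01, Rmax, Rmin. repeat destruct Rle_dec; lra. Qed.

Lemma clamp01_id x : in01 x -> clamp01 x = x.
Proof. unfold clamp01, in01, Rmax, Rmin. intros. repeat destruct Rle_dec; lra. Qed.

Lemma clamp01_lip x y : in01 x -> Rabs (clamp01 y - x) <= Rabs (y - x).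
Proof. unfold clamp01, in01, Rmax, Rmin. intros. repeat destruct Rle_dec;
  unfold Rabs; repeat destruct Rcase_abs; lra. Qed.

Lemma ivt01 (g : R -> R) a b : cont01 g -> 0 <= a -> a < b -> b <= 1 ->
  g a < 0 -> 0 < g b -> exists c, a < c < b /\ g c = 0.
Proof.
  intros Hg Ha Hab Hb Hga Hgb.
  destruct (IVT_interv (fun x => g (clamp01 x)) a b) as [z [Hz Hgz]]; auto.
  - intros t Ht eps Heps.
    assert (Hi : in01 t) by (unfold in01; lra).
    destruct (Hg t Hi eps Heps) as [d [Hd Hd']].
    exists d; split; [lra|]. intros y [_ Hy]. simpl in *. unfold R_dist in *.
    rewrite (clamp01_id t Hi). apply Hd'. apply clamp01_in.
    eapply Rle_lt_trans; [apply clamp01_lip; auto| exact Hy].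
  - rewrite clamp01_id; [lra| unfold in01; lra].
  - rewrite clamp01_id; [lra| unfold in01; lra].
  - rewrite clamp01_id in Hgz by (unfold in01; lra).
    exists z. split; [|auto]. destruct Hz as [Hz1 Hz2].
    split; apply Rnot_le_lt; intro; [assert (z = a) by lra | assert (z = b) by lra]; subst; lra.
Qed.

Lemma cont01_shift g y : cont01 g -> cont01 (fun t => g t - y).
Proof. intros H x Hx e He. destruct (H x Hx e He) as [d [Hd H']]. exists d; split; auto.
  intros. replace (g y0 - y - (g x - y)) with (g y0 - g x) by ring. auto. Qed.

Lemma cont01_opp g : cont01 g -> cont01 (fun t => - g t).
Proof. intros H x Hx e He. destruct (H x Hx e He) as [d [Hd H']]. exists d; split; auto.
  intros. replace (- g y - - g x) with (-(g y - g x)) by ring. rewrite Rabs_Ropp. auto. Qed.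

Lemma ivt01_up (g : R -> R) a b y : cont01 g -> 0 <= a -> a < b -> b <= 1 ->
  g a < y -> y < g b -> exists c, a < c < b /\ g c = y.
Proof. intros. destruct (ivt01 (fun t => g t - y) a b) as [c [Hc Hc']]; auto.
  apply cont01_shift; auto. all: try lra. exists c; split; auto; lra. Qed.

Lemma ivt01_down (g : R -> R) a b y : cont01 g -> 0 <= a -> a < b -> b <= 1 ->
  y < g a -> g b < y -> exists c, a < c < b /\ g c = y.
Proof. intros. destruct (ivt01_up (fun t => - g t) a b (-y)) as [c [Hc Hc']]; auto.
  apply cont01_opp; auto. all: try lra. exists c; split; auto; lra. Qed.

Lemma deriv01_cont v v' : deriv01 v v' -> cont01 v.
Proof.
  intros H x Hx e He. destruct (H x Hx 1 Rlt_0_1) as [d [Hd H']].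
  set (K := Rabs (v' x) + 2).
  assert (HK : 2 <= K) by (unfold K; pose proof (Rabs_pos (v' x)); lra).
  exists (Rmin d (e / K)). split.
  { apply Rmin_pos; auto. apply Rdiv_lt_0_compat; lra. }
  intros y Hy Hyx.
  assert (Hy1 : Rabs (y - x) < d) by (eapply Rlt_le_trans; [exact Hyx| apply Rmin_l]).
  assert (Hy2 : Rabs (y - x) < e / K) by (eapply Rlt_le_trans; [exact Hyx| apply Rmin_r]).
  specialize (H' y Hy Hy1).
  assert (Rabs (v y - v x) <= Rabs (v y - v x - v' x * (y - x)) + Rabs (v' x) * Rabs (y - x)).
  { rewrite <- Rabs_mult. replace (v y - v x) with ((v y - v x - v' x * (y - x)) + v' x * (y - x)) at 1 by ring.
    apply Rabs_triang. }
  assert (Rabs (y - x) * K < e).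
  { apply (Rmult_lt_compat_r K) in Hy2; [|lra]. unfold Rdiv in Hy2. rewrite Rmult_assoc, Rinv_l in Hy2; lra. }
  unfold K in *. pose proof (Rabs_pos (y - x)). nra.
Qed.

Lemma deriv01_sub v1 v1' v2 v2' : deriv01 v1 v1' -> deriv01 v2 v2' ->
  deriv01 (fun x => v2 x - v1 x) (fun x => v2' x - v1' x).
Proof.
  intros H1 H2 x Hx e He.
  destruct (H1 x Hx (e/2)) as [d1 [Hd1 H1']]; [lra|].
  destruct (H2 x Hx (e/2)) as [d2 [Hd2 H2']]; [lra|].
  exists (Rmin d1 d2). split; [apply Rmin_pos; auto|].
  intros y Hy Hyx.
  specialize (H1' y Hy (Rlt_le_trans _ _ _ Hyx (Rmin_l _ _))).
  specialize (H2' y Hy (Rlt_le_trans _ _ _ Hyx (Rmin_r _ _))).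
  replace (v2 y - v1 y - (v2 x - v1 x) - (v2' x - v1' x) * (y - x))
    with ((v2 y - v2 x - v2' x * (y - x)) - (v1 y - v1 x - v1' x * (y - x))) by ring.
  eapply Rle_trans; [apply Rabs_triang|]. rewrite Rabs_Ropp. lra.
Qed.

Definition prufer (th W W' P : R -> R) := cont01 th /\ deriv01 W W' /\
  forall x, in01 x -> 0 < P x /\ W x = P x * cos (th x) /\ W' x = -(P x * sin (th x)).

Lemma sin_pos_small d : Rabs d < PI / 2 -> 0 < sin d -> 0 < d.
Proof. intros Hd Hs. apply Rnot_le_lt. intro Hle.
  assert (0 <= sin (- d)) by (apply sin_ge_0; unfold Rabs in Hd; destruct Rcase_abs; lra).
  rewrite sin_neg in H. lra. Qed.

Lemma sin_neg_small d : Rabs d < PI / 2 -> sin d < 0 -> d < 0.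
Proof. intros Hd Hs. apply Rnot_le_lt. intro Hle.
  assert (0 <= sin d) by (apply sin_ge_0; unfold Rabs in Hd; destruct Rcase_abs; lra). lra. Qed.

Lemma lemA th W W' P x0 : prufer th W W' P -> in01 x0 -> cos (th x0) = 0 ->
  exists d, 0 < d /\ forall u, in01 u -> Rabs (u - x0) < d ->
    (x0 < u -> th u > th x0) /\ (u < x0 -> th u < th x0).
Proof.
  intros [Hc [Hd Hp]] Hx0 Hcos.
  destruct (Hp x0 Hx0) as [HP0 [HW0 HW0']].
  set (c := th x0) in *.
  set (a := W' x0).
  assert (Hs2 : sin c * sin c = 1) by (pose proof (sin2_cos2 c); unfold Rsqr in *; fold c in Hcos; rewrite Hcos in H; lra).
  assert (Ha2 : a * a = P x0 * P x0) by (unfold a; rewrite HW0'; replace (-(P x0 * sin c) * -(P x0 * sin c)) with (P x0 * P x0 * (sin c * sin c)) by ring; rewrite Hs2; ring).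
  assert (HaA : Rabs a * Rabs a = a * a) by (rewrite <- Rabs_mult; apply Rabs_right; nra).
  assert (Hapos : 0 < Rabs a) by (pose proof (Rabs_pos a); nra).
  destruct (Hc x0 Hx0 (PI/2)) as [d1 [Hd1 H1]]; [pose proof PI_RGT_0; lra|].
  destruct (Hd x0 Hx0 (Rabs a / 2)) as [d2 [Hd2 H2]]; [lra|].
  exists (Rmin d1 d2). split; [apply Rmin_pos; auto|].
  intros u Hu Hux.
  specialize (H1 u Hu (Rlt_le_trans _ _ _ Hux (Rmin_l _ _))).
  specialize (H2 u Hu (Rlt_le_trans _ _ _ Hux (Rmin_r _ _))).
  fold a in H2. fold c in H1.
  destruct (Hp u Hu) as [HPu [HWu _]].
  set (dd := th u - c) in *.
  assert (HWu' : W u * a = P u * P x0 * sin dd).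
  { rewrite HWu. unfold a. rewrite HW0'. replace (th u) with (c + dd) by (unfold dd; ring).
    rewrite cos_plus. rewrite Hcos.
    replace (P u * (0 * cos dd - sin c * sin dd) * - (P x0 * sin c)) with (P u * P x0 * sin dd * (sin c * sin c)) by ring.
    rewrite Hs2; ring. }
  assert (HW00 : W x0 = 0) by (rewrite HW0; rewrite Hcos; ring).
  rewrite HW00 in H2.
  set (e := W u - 0 - a * (u - x0)) in *.
  assert (Hea : Rabs (e * a) <= Rabs a / 2 * Rabs (u - x0) * Rabs a).
  { rewrite Rabs_mult. apply Rmult_le_compat_r; auto. apply Rabs_pos. }
  assert (HWa : W u * a = a * a * (u - x0) + e * a) by (unfold e; ring).
  pose proof (Rle_abs (e * a)). pose proof (Rle_abs (- (e * a))). rewrite Rabs_Ropp in H0.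
  assert (HPP : 0 < P u * P x0) by nra.
  assert (Haa : 0 < a * a) by nra.
  assert (Hq : Rabs a / 2 * Rabs (u - x0) * Rabs a = a * a * (Rabs (u - x0) / 2)).
  { rewrite <- HaA; field. }
  rewrite Hq in Hea.
  split; intro Hlt.
  - rewrite (Rabs_right (u - x0)) in Hea by lra.
    assert (0 < a * a * ((u - x0) / 2)) by (apply Rmult_lt_0_compat; lra).
    assert (0 < W u * a) by lra.
    assert (0 < sin dd).
    { apply (Rmult_lt_reg_l (P u * P x0)); lra. }
    pose proof (sin_pos_small dd H1 H5). unfold dd in H6. lra.
  - rewrite (Rabs_left (u - x0)) in Hea by lra.
    assert (0 < a * a * ((x0 - u) / 2)) by (apply Rmult_lt_0_compat; lra).
    assert (W u * a < 0) by lra.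
    assert (sin dd < 0).
    { apply (Rmult_lt_reg_l (P u * P x0)); lra. }
    pose proof (sin_neg_small dd H1 H5). unfold dd in H6. lra.
Qed.

Lemma mono th W W' P x y c : prufer th W W' P -> in01 x -> in01 y -> x < y ->
  cos c = 0 -> c <= th x -> c < th y.
Proof.
  intros Hpr Hx Hy Hxy Hc Hcx.
  pose proof Hpr as [Hct _].
  set (E := fun t => x <= t <= y /\ forall u, x < u <= t -> c < th u).
  destruct (completeness E) as [m [Hub Hlub]].
  { exists y. intros t [Ht _]. lra. }
  { exists x. split; [lra|]. intros; lra. }
  assert (Hm1 : x <= m) by (apply Hub; split; [lra| intros; lra]).
  assert (Hm2 : m <= y) by (apply Hlub; intros t [Ht _]; lra).
  assert (HP : forall u, x < u < m -> c < th u).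
  { intros u Hu. apply Rnot_le_lt. intro Hle.
    assert (m <= u); [|lra]. apply Hlub. intros t [Ht Ht'].
    apply Rnot_lt_le. intro Hut. specialize (Ht' u ltac:(lra)). lra. }
  assert (Hm01 : in01 m) by (unfold in01 in *; lra).
  assert (Hm3 : c < th m \/ m = x).
  { destruct (Req_dec m x) as [->|Hne]; [right; reflexivity|left].
    apply Rnot_le_lt. intro Hle.
    assert (Hex : exists d, 0 < d /\ forall u, in01 u -> Rabs (u - m) < d -> u < m -> th u < c).
    { destruct (Rlt_or_le (th m) c) as [Hlt|Hge].
      - destruct (Hct m Hm01 (c - th m)) as [d [Hd Hd']]; [lra|].
        exists d; split; auto. intros u Hu Hum _. specialize (Hd' u Hu Hum).
        unfold Rabs in Hd'; destruct Rcase_abs; lra.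
      - assert (Heq : th m = c) by lra.
        destruct (lemA th W W' P m Hpr Hm01) as [d [Hd Hd']]; [rewrite Heq; auto|].
        exists d; split; auto. intros u Hu Hum Hlt. destruct (Hd' u Hu Hum) as [_ H2]. 
        specialize (H2 Hlt). lra. }
    destruct Hex as [d [Hd Hd']].
    set (u := m - Rmin d (m - x) / 2).
    assert (Hmin1 : Rmin d (m - x) <= d) by apply Rmin_l.
    assert (Hmin2 : Rmin d (m - x) <= m - x) by apply Rmin_r.
    assert (Hmin0 : 0 < Rmin d (m - x)) by (apply Rmin_pos; lra).
    assert (Hu1 : x < u < m) by (unfold u; lra).
    assert (Hu01 : in01 u) by (unfold in01 in *; lra).
    assert (Hu2 : Rabs (u - m) < d) by (unfold u; rewrite Rabs_left; lra).
    specialize (Hd' u Hu01 Hu2 (proj2 Hu1)). specialize (HP u Hu1). lra. }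
  assert (Hext : exists d, 0 < d /\ forall u, in01 u -> m < u < m + d -> c < th u).
  { destruct (Rlt_or_le c (th m)) as [Hlt|Hge].
    - destruct (Hct m Hm01 (th m - c)) as [d [Hd Hd']]; [lra|].
      exists d; split; auto. intros u Hu Hum. assert (Rabs (u - m) < d) by (rewrite Rabs_right; lra).
      specialize (Hd' u Hu H). unfold Rabs in Hd'; destruct Rcase_abs; lra.
    - destruct Hm3 as [Hm3|Hm3]; [lra|]. subst m.
      assert (Heq : th x = c) by lra.
      destruct (lemA th W W' P x Hpr Hx) as [d [Hd Hd']]; [rewrite Heq; auto|].
      exists d; split; auto. intros u Hu Hum.
      assert (Rabs (u - x) < d) by (rewrite Rabs_right; lra).
      destruct (Hd' u Hu H) as [H1 _]. specialize (H1 (proj1 Hum)). lra. }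
  assert (Hmy : m = y).
  { destruct (Rle_lt_or_eq _ _ Hm2) as [Hlt|]; auto. exfalso.
    destruct Hext as [d [Hd Hd']].
    set (t := m + Rmin d (y - m) / 2).
    assert (Hmin1 : Rmin d (y - m) <= d) by apply Rmin_l.
    assert (Hmin2 : Rmin d (y - m) <= y - m) by apply Rmin_r.
    assert (Hmin0 : 0 < Rmin d (y - m)) by (apply Rmin_pos; lra).
    assert (E t).
    { split; [unfold t; split; lra|]. intros u Hu.
      destruct (Rtotal_order u m) as [Hum|[Hum|Hum]].
      - apply HP; lra.
      - subst u. destruct Hm3; [auto| lra].
      - apply Hd'; [unfold in01 in *; unfold t in Hu; lra| unfold t in Hu; lra]. }
    specialize (Hub t H). unfold t in Hub; lra. }
  subst m. destruct Hm3; [auto| lra].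
Qed.

Lemma mono_le th W W' P x y c : prufer th W W' P -> in01 x -> in01 y -> x <= y ->
  cos c = 0 -> c < th x -> c < th y.
Proof. intros. destruct (Rle_lt_or_eq _ _ H2) as [Hlt| ->]; auto.
  apply (mono th W W' P x y c); auto; lra. Qed.

Lemma mono_le' th W W' P x y c : prufer th W W' P -> in01 x -> in01 y -> x <= y ->
  cos c = 0 -> c <= th x -> c <= th y.
Proof. intros. destruct (Rle_lt_or_eq _ _ H2) as [Hlt| ->]; auto.
  left; apply (mono th W W' P x y c); auto. Qed.

Lemma cosZ k : cos (IZR k * PI + PI / 2) = 0.
Proof. rewrite cos_plus, cos_PI2, sin_PI2, sin_eq_0_1 by (exists k; reflexivity). ring. Qed.

Lemma cosN (i : nat) : cos (INR i * PI + PI / 2) = 0.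
Proof. rewrite INR_IZR_INZ. apply cosZ. Qed.

Lemma cosNm (i : nat) : cos (INR i * PI - PI / 2) = 0.
Proof. replace (INR i * PI - PI / 2) with (IZR (Z.of_nat i - 1) * PI + PI / 2).
  apply cosZ. rewrite minus_IZR, <- INR_IZR_INZ. simpl. field. Qed.

Lemma cos2N (i : nat) : cos (INR i * PI) * cos (INR i * PI) = 1.
Proof. pose proof (sin2_cos2 (INR i * PI)). rewrite sin_eq_0_1 in H.
  unfold Rsqr in H. lra. exists (Z.of_nat i). apply f_equal2; auto. apply INR_IZR_INZ. Qed.

Theorem lemma5p1
  (f : R -> R -> R -> R) (Hf : C1_3 f)
  (Hivp : forall a : R, exists v v' v'' : R -> R,
      is_sol01 f v v' v'' /\ v 0 = a /\ v' 0 = 0)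
  (vj vj' vj'' vk vk' vk'' : R -> R)
  (Hj : is_sol01 f vj vj' vj'') (Hjn : vj' 0 = 0 /\ vj' 1 = 0)
  (Hk : is_sol01 f vk vk' vk'') (Hkn : vk' 0 = 0 /\ vk' 1 = 0)
  (Hjk : vj 0 < vk 0)
  (theta : R -> R) (Htc : cont01 theta) (Ht0 : theta 0 = 0)
  (Hpruefer : exists rho : R -> R, forall x, in01 x ->
      0 < rho x /\
      (vk x - vj x) / (vk 0 - vj 0) = rho x * cos (theta x) /\
      (vk' x - vj' x) / (vk 0 - vj 0) = - (rho x * sin (theta x))) :
  exists n : nat, theta 1 = INR n * PI /\
    zero_number (fun x => vk x - vj x) n.
Proof.
  destruct Hpruefer as [rho Hr].
  assert (HD : 0 < vk 0 - vj 0) by lra.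
  set (D := vk 0 - vj 0) in *.
  set (W := fun x => vk x - vj x).
  set (W' := fun x => vk' x - vj' x).
  set (P := fun x => rho x * D).
  assert (Hpr : prufer theta W W' P).
  { split; [auto|split].
    - apply deriv01_sub; [apply Hj| apply Hk].
    - intros x Hx. destruct (Hr x Hx) as [h1 [h2 h3]]. unfold W, W', P. split; [|split].
      + apply Rmult_lt_0_compat; auto.
      + replace (vk x - vj x) with ((vk x - vj x) / D * D) by (field; lra). rewrite h2; ring.
      + replace (vk' x - vj' x) with ((vk' x - vj' x) / D * D) by (field; lra). rewrite h3; ring. }
  assert (H01 : in01 0) by (unfold in01; lra).
  assert (H11 : in01 1) by (unfold in01; lra).
  pose proof PI_RGT_0 as HPI.
  destruct Hpr as [_ [_ Hp]].
  assert (Hs1 : sin (theta 1) = 0).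
  { destruct (Hp 1 H11) as [h1 [_ h3]]. unfold W' in h3.
    rewrite (proj2 Hjn), (proj2 Hkn) in h3.
    apply (Rmult_eq_reg_l (P 1)); lra. }
  pose proof (conj Htc (conj (deriv01_sub _ _ _ _ (proj1 Hj) (proj1 Hk)) Hp)) as Hpr.
  fold W W' in Hpr.
  destruct (sin_eq_0_0 _ Hs1) as [m Hm].
  assert (Hcm : cos (- (PI / 2)) = 0) by (rewrite cos_neg; apply cos_PI2).
  assert (Hmpos : (0 <= m)%Z).
  { pose proof (mono theta W W' P 0 1 _ Hpr H01 H11 Rlt_0_1 Hcm ltac:(lra)) as Hlt.
    rewrite Hm in Hlt.
    assert (-1 < IZR m).
    { apply Rnot_le_lt. intro Hle. assert (IZR m * PI <= -1 * PI) by (apply Rmult_le_compat_r; lra). lra. }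
    apply lt_IZR in H. lia. }
  set (n := Z.to_nat m).
  assert (Hn : INR n = IZR m) by (unfold n; rewrite INR_IZR_INZ, Znat.Z2Nat.id; auto).
  assert (Hth1 : theta 1 = INR n * PI) by (rewrite Hn; auto).
  exists n. split; [auto|]. split.
  -
    assert (Hex : forall i, exists s, (i <= n)%nat -> in01 s /\ theta s = INR i * PI).
    { intro i. destruct (Nat.eq_dec i 0) as [->|Hi0].
      - exists 0. intros. split; auto. simpl. rewrite Ht0; ring.
      - destruct (Nat.eq_dec i n) as [->|Hin].
        + exists 1. intros. auto.
        + destruct (Compare_dec.le_lt_dec i n) as [Hle|Hgt]; [|exists 0; intros; lia].
          assert (Hlt : (0 < i < n)%nat) by lia.
          assert (0 < INR i) by (apply lt_0_INR; lia).
          assert (INR i < INR n) by (apply lt_INR; lia).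
          destruct (ivt01_up theta 0 1 (INR i * PI)) as [c [Hc Hc']]; auto; try lra.
          * rewrite Ht0. apply Rmult_lt_0_compat; lra.
          * rewrite Hth1. apply Rmult_lt_compat_r; lra.
          * exists c. intros. split; auto. unfold in01; lra. }
    set (s := fun i => proj1_sig (constructive_indefinite_description _ (Hex i))).
    assert (Hs : forall i, (i <= n)%nat -> in01 (s i) /\ theta (s i) = INR i * PI).
    { intros i Hi. unfold s. destruct (constructive_indefinite_description _ (Hex i)) as [x Hx]. simpl. auto. }
    exists s. split; [apply Hs|].
    intros i Hi. destruct (Hs i ltac:(lia)) as [Hi1 Hi2]. destruct (Hs (S i) ltac:(lia)) as [Hi1' Hi2'].
    split.
    + apply Rnot_le_lt. intro Hle.
      pose proof (mono_le' theta W W' P _ _ (INR i * PI + PI / 2) Hpr Hi1' Hi1 Hle (cosN i)) as Hm'.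
      rewrite Hi2', Hi2, S_INR in Hm'. lra.
    + destruct (Hp _ Hi1) as [Ha1 [Ha2 _]]. destruct (Hp _ Hi1') as [Hb1 [Hb2 _]].
      change ((fun x => vk x - vj x) (s i) * (fun x => vk x - vj x) (s (S i)) < 0).
      fold W. rewrite Ha2, Hb2, Hi2, Hi2', S_INR.
      replace ((INR i + 1) * PI) with (INR i * PI + PI) by ring. rewrite neg_cos.
      pose proof (cos2N i).
      replace (P (s i) * cos (INR i * PI) * (P (s (S i)) * - cos (INR i * PI)))
        with (- (P (s i) * P (s (S i)) * (cos (INR i * PI) * cos (INR i * PI)))) by ring.
      rewrite H. pose proof (Rmult_lt_0_compat _ _ Ha1 Hb1). lra.
  - intros [s [Hin Hsc]].
    assert (HWc : cont01 W) by (apply (deriv01_cont _ W'); apply (proj1 (proj2 Hpr))).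
    assert (Hclaim : forall i, (i <= S n)%nat -> INR i * PI - PI / 2 < theta (s i)).
    { induction i as [|i IH]; intro Hi.
      - simpl. replace (0 * PI - PI / 2) with (- (PI / 2)) by ring.
        apply (mono_le theta W W' P 0 (s 0%nat)); auto. apply Hin; lia.
        pose proof (Hin 0%nat ltac:(lia)) as [h _]. auto. lra.
      - specialize (IH ltac:(lia)).
        destruct (Hsc i ltac:(lia)) as [Hlt Hprod].
        pose proof (Hin i ltac:(lia)) as Hi1. pose proof (Hin (S i) ltac:(lia)) as Hi1'.
        change ((fun x => vk x - vj x) (s i) * (fun x => vk x - vj x) (s (S i)) < 0) in Hprod.
        fold W in Hprod.
        assert (Hz : exists t, s i < t < s (S i) /\ W t = 0).
        { destruct (Rlt_or_le (W (s i)) 0) as [Hneg|Hpos].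
          - unfold in01 in Hi1, Hi1'. apply ivt01_up; auto; try lra. nra.
          - unfold in01 in Hi1, Hi1'. apply ivt01_down; auto; try lra.
            all: destruct Hpos as [Hpos|Hpos]; [nra| rewrite <- Hpos in Hprod; lra]. }
        destruct Hz as [t [Ht HWt]].
        assert (Ht01 : in01 t) by (unfold in01 in *; lra).
        assert (Hct : cos (theta t) = 0).
        { destruct (Hp t Ht01) as [h1 [h2 _]]. rewrite h2 in HWt.
          apply (Rmult_eq_reg_l (P t)); lra. }
        pose proof (mono_le theta W W' P (s i) t _ Hpr Hi1 Ht01 ltac:(lra) (cosNm i) IH) as Hti.
        destruct (cos_eq_0_0 _ Hct) as [k Hk'].
        rewrite Hk', INR_IZR_INZ in Hti.
        assert (Hki : (Z.of_nat i <= k)%Z).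
        { assert (IZR (Z.of_nat i) - 1 < IZR k).
          { apply Rnot_le_lt. intro Hle.
            assert (IZR k * PI <= (IZR (Z.of_nat i) - 1) * PI) by (apply Rmult_le_compat_r; lra). lra. }
          rewrite <- minus_IZR in H. apply lt_IZR in H. lia. }
        apply IZR_le in Hki.
        pose proof (mono theta W W' P t (s (S i)) _ Hpr Ht01 Hi1' ltac:(lra) Hct (Rle_refl _)) as Hf2.
        rewrite Hk' in Hf2. rewrite S_INR, INR_IZR_INZ.
        assert (IZR (Z.of_nat i) * PI <= IZR k * PI) by (apply Rmult_le_compat_r; lra). lra. }
    specialize (Hclaim (S n) (le_n _)).
    pose proof (mono_le theta W W' P (s (S n)) 1 (INR n * PI + PI / 2) Hpr (Hin (S n) (le_n _)) H11) as Hfin.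
    rewrite S_INR in Hclaim. rewrite Hth1 in Hfin.
    assert (INR n * PI + PI / 2 < INR n * PI); [|lra].
    apply Hfin; [apply Hin; lia | apply cosN | lra].
Qed.
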